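(* The set $\mathcal{L}_{ME}=\{(M,q)\mid ME[U](M)>q\}$ is an observable hyperproperty. That is, for every rational $q$, the set of programs $\{M\mid ME[U](M)>q\}$ is an observable hyperproperty.
   Context: Stores map variables to values; $H$ is the high input variable and $O$ the low output variable. A trace is a sequence of stores. For a finite trace $t$, $t\circ t'$ is concatenation. A program is a set $M$ of infinite traces that is deterministic (two traces with the same initial value of $H$ are equal) and has a finite nonempty input domain $\mathbb{H}_M=\{\sigma_0(H)\}$. Input domains are unbounded in size. $M(h)$ is the output trace $(\sigma_1(O),\sigma_2(O),\dots)$ of the trace of $M$ starting with $H=h$. $\bot$ denotes termination. $M(h)=o$ means that for all $i$, $o_i=\bot$ or $M(h)_i=\bot$ or $M(h)_i=o_i$. For a distribution $\mu$ on $\mathbb{H}_M$, $\mu(O=o)=\sum_{h:M(h)=o}\mu(H=h)$, with conditional probabilities induced accordingly. $U$ is the uniform distribution on $\mathbb{H}_M$. Min-entropy QIF (log base 2): - $\mathcal{V}[\mu](X)=\max_x\mu(X=x)$. - $\mathcal{V}[\mu](X|Y)=\sum_y\mu(Y=y)\max_x\mu(X=x|Y=y)$. - $ME[\mu](M)=\log\frac1{\mathcal{V}[\mu](H)}-\log\frac1{\mathcal{V}[\mu](H|O)}$. $\mathit{Prop}$ is the set of programs; $\mathit{Obs}$ is the set of deterministic finite sets of finite traces. For $S\in\mathit{Obs}$ and $T\in\mathit{Prop}$, $S\le T$ iff every $t\in S$ has some $t'$ with $t\circ t'\in T$. $P\subseteq\mathit{Prop}$ is observable iff for every $S\in P$ there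 is $T\in\mathit{Obs}$ with $T\le S$ such that every $S'\in\mathit{Prop}$ with $T\le S'$ is in $P$. A set $\mathcal{P}$ of pairs (program, rational) is observable iff $\{M\mid(M,q)\in\mathcal{P}\}$ is observable for every rational $q$. *)

(* Defs.v *)
From Stdlib Require Import Reals List ZArith QArith Qreals.
From Stdlib Require Import ClassicalEpsilon ClassicalDescription.
Open Scope R_scope.

(** Variables: the high input H, the low output O, and any other variables. *)
Inductive var : Type := VH | VO | Vother (n : nat).

(** Values; [None] is the special value ⊥ (termination). *)
Definition val : Type := option Z.
Definition bot : val := None.

Definition store : Type := var -> val.
Definition itrace : Type := nat -> store.
Definition ftrace : Type := list store.

Definition input_dom (M : itrace -> Prop) (h : val) : Prop :=
  exists t, M t /\ t 0%nat VH = h.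

Definition is_program (M : itrace -> Prop) : Prop :=
  (forall t1 t2, M t1 -> M t2 -> t1 0%nat VH = t2 0%nat VH -> t1 = t2) /\
  (exists l : list val, l <> nil /\ forall h, In h l <-> input_dom M h).

Definition is_obs (T : ftrace -> Prop) : Prop :=
  (exists l : list ftrace, forall t, In t l <-> T t) /\
  (forall t1 t2 s1 s2 r1 r2, T t1 -> T t2 -> t1 = s1 :: r1 -> t2 = s2 :: r2 ->
     s1 VH = s2 VH -> t1 = t2).

Definition tcat (t : ftrace) (t' : itrace) : itrace :=
  fun n => if Nat.ltb n (length t) then nth n t (fun _ => bot)
           else t' (n - length t)%nat.

Definition obs_le (Sx : ftrace -> Prop) (T : itrace -> Prop) : Prop :=
  forall t, Sx t -> exists t', T (tcat t t').

Definition observable (P : (itrace -> Prop) -> Prop) : Prop :=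
  forall Sp, is_program Sp -> P Sp ->
    exists T, is_obs T /\ obs_le T Sp /\
      forall Sp', is_program Sp' -> obs_le T Sp' -> P Sp'.

Definition observable_pairs (L : (itrace -> Prop) -> Q -> Prop) : Prop :=
  forall q : Q, observable (fun M => L M q).

Definition dom_list (M : itrace -> Prop) : list val :=
  epsilon (inhabits nil)
    (fun l => NoDup l /\ forall h, In h l <-> input_dom M h).

Definition out_of (t : itrace) : nat -> val := fun i => t (S i) VO.

Definition out_list (M : itrace -> Prop) : list (nat -> val) :=
  epsilon (inhabits nil)
    (fun l => NoDup l /\ forall o, In o l <-> exists t, M t /\ o = out_of t).

(** M(h) = o (equality up to ⊥). *)
Definition out_is (M : itrace -> Prop) (h : val) (o : nat -> val) : Prop :=
  exists t, M t /\ t 0%nat VH = h /\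
    forall i, o i = bot \/ out_of t i = bot \/ out_of t i = o i.

Definition ind (P : Prop) : R := if excluded_middle_informative P then 1 else 0.
Definition sumR (l : list R) : R := fold_right Rplus 0 l.
Definition maxR (l : list R) : R := fold_right Rmax 0 l.

(** mu : distribution on H_M (given as a function val -> R). *)
Definition mu_O (M : itrace -> Prop) (mu : val -> R) (o : nat -> val) : R :=
  sumR (map (fun h => ind (out_is M h o) * mu h) (dom_list M)).
Definition mu_HO (M : itrace -> Prop) (mu : val -> R) (h : val) (o : nat -> val) : R :=
  ind (out_is M h o) * mu h.
Definition mu_H_given_O (M : itrace -> Prop) (mu : val -> R) (h : val) (o : nat -> val) : R :=
  mu_HO M mu h o / mu_O M mu o.

Definition V_H (M : itrace -> Prop) (mu : val -> R) : R :=
  maxR (map mu (dom_list M)).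
Definition V_H_O (M : itrace -> Prop) (mu : val -> R) : R :=
  sumR (map (fun o => mu_O M mu o *
                maxR (map (fun h => mu_H_given_O M mu h o) (dom_list M)))
            (out_list M)).

Definition log2 (x : R) : R := ln x / ln 2.

Definition ME (M : itrace -> Prop) (mu : val -> R) : R :=
  log2 (1 / V_H M mu) - log2 (1 / V_H_O M mu).

Definition U (M : itrace -> Prop) : val -> R :=
  fun h => ind (In h (dom_list M)) / INR (length (dom_list M)).

Definition L_ME (M : itrace -> Prop) (q : Q) : Prop :=
  is_program M /\ ME M (U M) > Q2R q.

(* Main.v *)
Require Import Defs.
From Stdlib Require Import Reals List ZArith QArith Qreals Lra Lia.
From Stdlib Require Import Classical ClassicalEpsilon ClassicalDescription FunctionalExtensionality.
Open Scope R_scope.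

Lemma nodup_exists {A : Type} (l : list A) :
  exists l', NoDup l' /\ forall x, In x l' <-> In x l.
Proof.
  induction l as [|a l [l' [Hn Hi]]].
  - exists nil; split; [constructor| simpl; tauto].
  - destruct (classic (In a l')) as [Ha|Ha].
    + exists l'; split; auto. intro x; simpl. split.
      * intro H; right; apply Hi; exact H.
      * intros [<-|H]; [exact Ha | apply Hi; exact H].
    + exists (a :: l'); split; [constructor; auto|]. intro x; simpl; rewrite Hi; tauto.
Qed.

Lemma traces_aux (M : itrace -> Prop) (l0 : list val) :
  (forall h, In h l0 -> input_dom M h) ->
  exists lt, (forall t, In t lt -> M t) /\
    forall h, In h l0 -> exists t, In t lt /\ t 0%nat VH = h.
Proof.
  induction l0 as [|a l0 IH]; intros H.
  - exists nil; split; [intros t []| intros h []].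
  - destruct (H a (or_introl eq_refl)) as [t [Mt Ht]].
    destruct IH as [lt [H1 H2]]. { intros h Hh; apply H; right; auto. }
    exists (t :: lt); split.
    + intros t' [<-|Ht']; auto.
    + intros h [<-|Hh]. exists t; split; [left; auto| auto].
      destruct (H2 h Hh) as [t' [Ht' E]]. exists t'; split; [right; auto|auto].
Qed.

Lemma prog_traces M : is_program M ->
  exists lt : list itrace, forall t, M t <-> In t lt.
Proof.
  intros [Hdet [l [_ Hl]]].
  destruct (traces_aux M l (fun h Hh => proj1 (Hl h) Hh)) as [lt [H1 H2]].
  exists lt. intro t; split; auto.
  intro Mt. assert (Hin : In (t 0%nat VH) l) by (apply Hl; exists t; auto).
  destruct (H2 _ Hin) as [t' [Ht' E]].
  rewrite <- (Hdet t' t); auto.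
Qed.

Lemma dom_spec M : is_program M ->
  NoDup (dom_list M) /\ forall h, In h (dom_list M) <-> input_dom M h.
Proof.
  intros [_ [l [_ Hl]]]. unfold dom_list. apply epsilon_spec.
  destruct (nodup_exists l) as [l' [Hn Hi]]. exists l'. split; auto.
  intro h; rewrite Hi; apply Hl.
Qed.

Lemma out_spec M : is_program M ->
  NoDup (out_list M) /\ forall o, In o (out_list M) <-> exists t, M t /\ o = out_of t.
Proof.
  intros HM. destruct (prog_traces M HM) as [lt Hlt].
  unfold out_list. apply epsilon_spec.
  destruct (nodup_exists (map out_of lt)) as [l' [Hn Hi]]. exists l'. split; auto.
  intro o; rewrite Hi, in_map_iff. split.
  - intros [t [<- Ht]]. exists t; split; auto; apply Hlt; auto.
  - intros [t [Ht ->]]. exists t; split; auto; apply Hlt; auto.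
Qed.

Lemma ind_true (P:Prop) : P -> Defs.ind P = 1.
Proof. intro H; unfold Defs.ind; destruct excluded_middle_informative; tauto. Qed.
Lemma ind_01 (P : Prop) : Defs.ind P = 0 \/ Defs.ind P = 1.
Proof. unfold Defs.ind; destruct excluded_middle_informative; auto. Qed.

Lemma maxR_ge l x : In x l -> x <= maxR l.
Proof.
  induction l; simpl; [tauto|]. intros [<-|H]. apply Rmax_l.
  eapply Rle_trans; [apply IHl; auto| apply Rmax_r].
Qed.
Lemma maxR_le l c : 0 <= c -> (forall x, In x l -> x <= c) -> maxR l <= c.
Proof.
  intros Hc; induction l; simpl; intros H; auto.
  apply Rmax_lub. apply H; left; auto. apply IHl; intros x Hx; apply H; right; auto.
Qed.

Lemma sumR_const {A} (l : list A) c : sumR (map (fun _ => c) l) = INR (length l) * c.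
Proof. induction l; [simpl; lra|]. unfold sumR in *. cbn [map fold_right].
  rewrite IHl. change (length (a :: l)) with (S (length l)). rewrite S_INR; lra. Qed.

Lemma sumR_nonneg l : (forall y, In y l -> 0 <= y) -> 0 <= sumR l.
Proof.
  induction l; simpl; intros H; [lra|].
  assert (0 <= a) by (apply H; auto). assert (0 <= sumR l) by (apply IHl; auto). lra.
Qed.

Lemma sumR_ge l x : In x l -> (forall y, In y l -> 0 <= y) -> x <= sumR l.
Proof.
  induction l; simpl; [tauto|]. intros Hx H.
  assert (0 <= a) by (apply H; auto). assert (0 <= sumR l) by (apply sumR_nonneg; auto).
  destruct Hx as [<-|Hx]. lra.
  assert (x <= sumR l) by (apply IHl; auto). lra.
Qed.

Lemma ME_eq M : is_program M ->
  ME M (U M) = log2 (INR (length (out_list M))) /\ (1 <= length (out_list M))%nat.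
Proof.
  intros HM.
  destruct (dom_spec M HM) as [Dn Di]. destruct (out_spec M HM) as [On Oi].
  destruct HM as [Hdet [l [Hne Hl]]].
  destruct l as [|h0 l]; [congruence|].
  destruct (proj1 (Hl h0) (or_introl eq_refl)) as [t0 [Mt0 Ht0]].
  assert (Hn : (1 <= length (dom_list M))%nat).
  { assert (In h0 (dom_list M)) by (apply Di; exists t0; auto).
    destruct (dom_list M); simpl in *; [contradiction| lia]. }
  assert (Hk : (1 <= length (out_list M))%nat).
  { assert (In (out_of t0) (out_list M)) by (apply Oi; exists t0; auto).
    destruct (out_list M); simpl in *; [contradiction| lia]. }
  split; [|exact Hk].
  assert (nR : 0 < INR (length (dom_list M))) by (apply lt_0_INR; lia).
  assert (kR : 0 < INR (length (out_list M))) by (apply lt_0_INR; lia).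
  assert (HU : forall h, In h (dom_list M) -> U M h = 1 / INR (length (dom_list M))).
  { intros h Hh; unfold U; rewrite ind_true by auto; reflexivity. }
  set (n := INR (length (dom_list M))) in *.
  set (k := INR (length (out_list M))) in *.
  assert (EVH : V_H M (U M) = 1 / n).
  { unfold V_H. apply Rle_antisym.
    - apply maxR_le. unfold Rdiv; rewrite Rmult_1_l; left; apply Rinv_0_lt_compat; auto.
      intros x Hx. apply in_map_iff in Hx. destruct Hx as [h [<- Hh]]. rewrite HU; auto; lra.
    - assert (Hh0 : In h0 (dom_list M)) by (apply Di; exists t0; auto).
      apply maxR_ge. rewrite <- (HU h0 Hh0). apply in_map; auto. }
  assert (VHO : V_H_O M (U M) = INR (length (out_list M)) * (1 / n)).
  { unfold V_H_O. rewrite <- sumR_const. f_equal. apply map_ext_in. intros o Ho.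
    destruct (proj1 (Oi o) Ho) as [t [Mt ->]].
    set (h1 := t 0%nat VH).
    assert (Hh1 : In h1 (dom_list M)) by (apply Di; exists t; auto).
    assert (Hout : out_is M h1 (out_of t)).
    { exists t; split; auto; split; auto. }
    set (m := mu_O M (U M) (out_of t)).
    assert (Hm : 1 / n <= m).
    { unfold m, mu_O. apply sumR_ge.
      - replace (1 / n) with (Defs.ind (out_is M h1 (out_of t)) * U M h1)
          by (rewrite ind_true by exact Hout; rewrite HU by exact Hh1; lra).
        apply (in_map (fun h => Defs.ind (out_is M h (out_of t)) * U M h)); auto.
      - intros y Hy. apply in_map_iff in Hy. destruct Hy as [h [<- Hh]].
        rewrite HU by auto. destruct (ind_01 (out_is M h (out_of t))) as [E|E]; rewrite E.
        lra. unfold Rdiv; rewrite !Rmult_1_l; left; apply Rinv_0_lt_compat; auto. }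
    assert (Hn' : 0 < 1 / n) by (unfold Rdiv; rewrite Rmult_1_l; apply Rinv_0_lt_compat; auto).
    assert (Hmax : maxR (map (fun h => mu_H_given_O M (U M) h (out_of t)) (dom_list M)) = (1/n) / m).
    { apply Rle_antisym.
      - apply maxR_le. unfold Rdiv at 1. apply Rmult_le_pos; [lra|]. left; apply Rinv_0_lt_compat; lra.
        intros x Hx. apply in_map_iff in Hx. destruct Hx as [h [<- Hh]].
        unfold mu_H_given_O, mu_HO. fold m. rewrite HU by auto.
        destruct (ind_01 (out_is M h (out_of t))) as [E|E]; rewrite E.
        + unfold Rdiv. rewrite !Rmult_0_l. apply Rmult_le_pos; [lra|]. left; apply Rinv_0_lt_compat; lra.
        + rewrite Rmult_1_l. lra.
      - apply maxR_ge.
        replace ((1/n)/m) with (mu_H_given_O M (U M) h1 (out_of t)).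
        apply (in_map (fun h => mu_H_given_O M (U M) h (out_of t))); auto.
        unfold mu_H_given_O, mu_HO. fold m. rewrite ind_true by exact Hout. rewrite HU by exact Hh1. lra. }
    rewrite Hmax. field. lra. }
  unfold ME, log2. rewrite EVH, VHO. fold k.
  replace (1 / (1 / n)) with n by (field; lra).
  replace (1 / (k * (1 / n))) with (n * / k) by (field; split; lra).
  rewrite ln_mult, ln_Rinv; try lra.
  all: try (apply Rinv_0_lt_compat; lra). all: try (unfold Rdiv; ring).
Qed.

Lemma fin_bound {A} (l : list A) (Q : A -> nat -> Prop) :
  (forall x, In x l -> exists i, Q x i) ->
  exists N, forall x, In x l -> exists i, (i < N)%nat /\ Q x i.
Proof.
  induction l as [|a l IH]; intros H.
  - exists 0%nat; intros x [].
  - destruct (H a (or_introl eq_refl)) as [i Hi].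
    destruct IH as [N HN]. { intros x Hx; apply H; right; auto. }
    exists (S (Nat.max i N)). intros x [<-|Hx].
    + exists i; split; [lia|auto].
    + destruct (HN x Hx) as [j [Hj Qj]]. exists j; split; [lia|auto].
Qed.

Lemma pre_nth (t : itrace) L n d : (n < L)%nat -> nth n (map t (seq 0 L)) d = t n.
Proof.
  intros H. rewrite nth_indep with (d' := t 0%nat) by (rewrite length_map, length_seq; lia).
  rewrite map_nth, seq_nth by lia. reflexivity.
Qed.

Lemma tcat_pre (t : itrace) L t' n : (n < L)%nat -> tcat (map t (seq 0 L)) t' n = t n.
Proof.
  intros H. unfold tcat. rewrite length_map, length_seq.
  destruct (Nat.ltb_spec n L); [|lia]. apply pre_nth; auto.
Qed.

Lemma log2_le x y : 0 < x -> x <= y -> log2 x <= log2 y.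
Proof.
  intros Hx Hxy. unfold log2, Rdiv. apply Rmult_le_compat_r.
  - left; apply Rinv_0_lt_compat. rewrite <- ln_1. apply ln_increasing; lra.
  - destruct Hxy as [H|H]; [left; apply ln_increasing; auto| right; subst; auto].
Qed.

Theorem theorem5 : observable_pairs L_ME.
Proof.
  intros q Sp HSp [_ HME].
  destruct (prog_traces Sp HSp) as [lt Hlt].
  destruct (ME_eq Sp HSp) as [EME K1].
  destruct (out_spec Sp HSp) as [On Oi].
  destruct (fin_bound (list_prod (out_list Sp) (out_list Sp))
              (fun p i => fst p <> snd p -> fst p i <> snd p i)) as [N HN].
  { intros [o1 o2] _. simpl. destruct (classic (o1 = o2)) as [E|E].
    - exists 0%nat; tauto.
    - destruct (not_all_ex_not _ _ (fun H => E (functional_extensionality _ _ H))) as [i Hi].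
      exists i; auto. }
  set (L := S N).
  set (pre := fun t : itrace => map t (seq 0 L)).
  exists (fun p => exists t, Sp t /\ p = pre t).
  split; [|split].
  - split.
    + exists (map pre lt). intro p. rewrite in_map_iff. split.
      * intros [t [<- Ht]]. exists t; split; auto; apply Hlt; auto.
      * intros [t [Ht ->]]. exists t; split; auto; apply Hlt; auto.
    + intros p1 p2 s1 s2 r1 r2 [t1 [Ht1 ->]] [t2 [Ht2 ->]] E1 E2 Hs.
      unfold pre, L in E1, E2. simpl in E1, E2.
      injection E1 as <- _. injection E2 as <- _.
      rewrite (proj1 HSp t1 t2 Ht1 Ht2 Hs). reflexivity.
  - intros p [t [Ht ->]]. exists (fun n => t (n + L)%nat).
    replace (tcat (pre t) (fun n => t (n + L)%nat)) with t; auto.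
    apply functional_extensionality; intro n.
    destruct (Nat.ltb_spec n L).
    + symmetry; apply tcat_pre; auto.
    + unfold tcat, pre. rewrite length_map, length_seq.
      destruct (Nat.ltb_spec n L); [lia|]. f_equal; lia.
  - intros Sp' HSp' Hle. split; auto.
    destruct (ME_eq Sp' HSp') as [EME' _]. rewrite EME'. rewrite EME in HME.
    destruct (out_spec Sp' HSp') as [On' Oi'].
    assert (agree : forall t, Sp t -> exists t2, Sp' t2 /\ forall n, (n < L)%nat -> t2 n = t n).
    { intros t Ht. destruct (Hle (pre t) (ex_intro _ t (conj Ht eq_refl))) as [t' Ht'].
      exists (tcat (pre t) t'); split; auto. intros n Hn. apply tcat_pre; auto. }
    set (g := fun o : nat -> val => epsilon (inhabits (fun _ : nat => bot))
       (fun o' => exists t t2, Sp t /\ o = out_of t /\ Sp' t2 /\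
          (forall n, (n < L)%nat -> t2 n = t n) /\ o' = out_of t2)).
    assert (Hg : forall o, In o (out_list Sp) -> exists t t2, Sp t /\ o = out_of t /\ Sp' t2 /\
          (forall n, (n < L)%nat -> t2 n = t n) /\ g o = out_of t2).
    { intros o Ho. unfold g. apply epsilon_spec.
      destruct (proj1 (Oi o) Ho) as [t [Ht Eo]].
      destruct (agree t Ht) as [t2 [Ht2 Ha]].
      exists (out_of t2), t, t2; auto. }
    assert (Hlen : (length (out_list Sp) <= length (out_list Sp'))%nat).
    { rewrite <- (length_map g). apply NoDup_incl_length.
      - apply NoDup_map_NoDup_ForallPairs; auto.
        intros o1 o2 H1 H2 Heq. destruct (classic (o1 = o2)) as [E|E]; auto. exfalso.
        destruct (HN (o1, o2) (in_prod _ _ _ _ H1 H2)) as [i [Hi Hd]].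
        simpl in Hd. specialize (Hd E).
        destruct (Hg o1 H1) as [t1 [t21 [_ [Eo1 [_ [Ha1 Hg1]]]]]].
        destruct (Hg o2 H2) as [t2 [t22 [_ [Eo2 [_ [Ha2 Hg2]]]]]].
        assert (X : out_of t21 i = out_of t22 i) by (rewrite <- Hg1, <- Hg2, Heq; reflexivity).
        apply Hd. rewrite Eo1, Eo2. unfold out_of in *.
        rewrite <- (Ha1 (S i)), <- (Ha2 (S i)) by (unfold L; lia). exact X.
      - intros o' Ho'. apply in_map_iff in Ho'. destruct Ho' as [o [<- Ho]].
        destruct (Hg o Ho) as [t [t2 [_ [_ [Ht2 [_ Eg]]]]]].
        apply Oi'. exists t2; auto. }
    eapply Rlt_le_trans; [exact HME|]. apply log2_le.
    + apply lt_0_INR; lia.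
    + apply le_INR; auto.
Qed.
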